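(* Let $\mathcal{O}=(X_{\min},X_{\max})$ be bounded, $T>0$, and let $a=\tfrac12\sigma^2$, $b$, $r$ be bounded functions on $(0,T)\times\mathcal{O}$ with $a(t,x)\ge\eta_0>0$ and $|a(t,x)-a(t,y)|\le L|x-y|$ for all $t\in(0,T)$, $x,y\in\mathcal{O}$. For $J\ge1$, $h=\frac{X_{\max}-X_{\min}}{J+1}$, $x_j=X_{\min}+jh$, and a fixed time $t$, write $a_j=a(t,x_j)$, $b_j=b(t,x_j)$, $r_j=r(t,x_j)$, and let $\tilde A$ be the $J\times J$ matrix defined by, for $x\in\mathbb{R}^J$ extended by $x_{-1}=x_0=x_{J+1}=x_{J+2}=0$, $$(\tilde Ax)_j=a_j\Big[\tfrac{-x_{j-1}+2x_j-x_{j+1}}{h^2}+\tfrac{x_{j-2}-4x_{j-1}+6x_j-4x_{j+1}+x_{j+2}}{12h^2}\Big]+b_j\Big[\tfrac{x_{j+1}-x_{j-1}}{2h}+\tfrac{x_{j-2}-2x_{j-1}+2x_{j+1}-x_{j+2}}{12h}\Big]+r_jx_j,$$ $j=1,\dots,J$ (the fourth-order finite difference approximation of $-a w_{xx}+b w_x+r w$). Then there exist $\eta_2>0$ and $\gamma_2\ge0$, independent of $J$, $h$ and $t$, such that for all $x\in\mathbb{R}^J$, $$\langle x,\tilde Ax\rangle\ge\eta_2N(x/h)^2-\gamma_2\|x\|_2^2,$$ where $N(x):=\big(\sum_{j=1}^{J+1}|x_j-x_{j-1}|^2\big)^{1/2}$ with $x_0=x_{J+1}=0$.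
   Context: $\langle\cdot,\cdot\rangle$ and $\|\cdot\|_2$ denote the Euclidean inner product and norm on $\mathbb{R}^J$. *)

(* Defs.v *)
From HB Require Import structures.
From mathcomp Require Import all_boot all_order all_algebra.
From mathcomp Require Import reals.
Set Implicit Arguments. Unset Strict Implicit. Unset Printing Implicit Defensive.
Import Order.TTheory GRing.Theory Num.Theory.
Local Open Scope ring_scope.

Section Defs.
Variable R : realType.

(* Extension of x in R^J (a column vector indexed 0..J-1, representing
   x_1..x_J) to all integer indices j, with x_j = 0 for j outside 1..J. *)
Definition ext (J : nat) (x : 'cV[R]_J) (j : int) : R :=
  \sum_(i < J) (if (Posz i.+1 == j) then x i ord0 else 0).

Definition mesh (Xmin Xmax : R) (J : nat) : R := (Xmax - Xmin) / (J.+1)%:R.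

Definition grid (Xmin Xmax : R) (J j : nat) : R := Xmin + j%:R * mesh Xmin Xmax J.

(* The fourth-order finite difference operator tilde A applied to x,
   at time t: component i (0-based) corresponds to j = i+1. *)
Definition Atilde_app (a b r : R -> R -> R) (Xmin Xmax : R) (J : nat) (t : R)
    (x : 'cV[R]_J) : 'cV[R]_J :=
  let h := mesh Xmin Xmax J in
  \col_(i < J)
    let j : int := Posz i.+1 in
    let xm2 := ext x (j - 2) in let xm1 := ext x (j - 1) in
    let x0 := ext x j in
    let xp1 := ext x (j + 1) in let xp2 := ext x (j + 2) in
    let xj := grid Xmin Xmax J i.+1 in
    a t xj * ((- xm1 + 2 * x0 - xp1) / h ^+ 2
              + (xm2 - 4 * xm1 + 6 * x0 - 4 * xp1 + xp2) / (12 * h ^+ 2))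
    + b t xj * ((xp1 - xm1) / (2 * h)
              + (xm2 - 2 * xm1 + 2 * xp1 - xp2) / (12 * h))
    + r t xj * x0.

Definition dotv (J : nat) (x y : 'cV[R]_J) : R := \sum_(i < J) x i ord0 * y i ord0.
Definition norm2sq (J : nat) (x : 'cV[R]_J) : R := \sum_(i < J) x i ord0 ^+ 2.

Definition Nnorm (J : nat) (x : 'cV[R]_J) : R :=
  Num.sqrt (\sum_(k < J.+1) `|ext x (Posz k.+1) - ext x (Posz k)| ^+ 2).

End Defs.

(* Main.v *)
Require Import Defs.
From HB Require Import structures.
From mathcomp Require Import all_boot all_order all_algebra.
From mathcomp Require Import reals.
From mathcomp Require Import ring lra zify.
Import Order.TTheory GRing.Theory Num.Theory.
Local Open Scope ring_scope.

Set Implicit Arguments.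
Definition Tf {R : realType} (z0 z1 z2 z3 a1 a2 : R) : R :=
  a1 * z1 * (z2 - z1) + a1 * z1 * ((2*z2 - z1 - z3) - (2*z1 - z0 - z2)) / 12
  - a2 * (2*z1 - z0 - z2) * (z2 - z1) / 12.

Lemma cross {R : realType} (p u v K h e : R) : `|p| <= K * h -> 0 <= K -> 0 <= h -> 0 < e ->
  - (e * v ^+ 2) - (K ^+ 2 / (4 * e)) * h ^+ 2 * u ^+ 2 <= p * u * v.
Proof.
move=> hp hK hh he.
have h1 : - (`|p| * `|u| * `|v|) <= p * u * v.
  rewrite -!normrM lerNl; have := ler_norm (- (p * u * v)); by rewrite normrN.
have h2 : `|p| * `|u| * `|v| <= K * h * `|u| * `|v|.
  by do 2 apply: ler_wpM2r => //.
have h3 : K * h * `|u| * `|v| <= e * v ^+ 2 + (K ^+ 2 / (4 * e)) * h ^+ 2 * u ^+ 2.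
  have hv : v ^+ 2 = `|v| ^+ 2 by rewrite real_normK // num_real.
  have hu : u ^+ 2 = `|u| ^+ 2 by rewrite real_normK // num_real.
  rewrite hu hv.
  have hsq : 0 <= (2 * e * `|v| - K * h * `|u|) ^+ 2 by apply: sqr_ge0.
  have he4 : 0 < 4 * e by lra.
  rewrite -(ler_pM2l he4).
  have -> : 4 * e * (e * `|v| ^+ 2 + K ^+ 2 / (4 * e) * h ^+ 2 * `|u| ^+ 2)
     = 4 * e ^+ 2 * `|v| ^+ 2 + K ^+ 2 * h ^+ 2 * `|u| ^+ 2.
    field; lra.
  nra.
lra.
Qed.

Definition Sk {R : realType} (z0 z1 z2 z3 z4 a2 bb rr h : R) : R :=
  z2 * ( a2*((-z1+2*z2-z3) + (z0-4*z1+6*z2-4*z3+z4)/12) + h*bb*((z3-z1)/2 + (z0-2*z1+2*z3-z4)/12) + h^+2*rr*z2 ).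

Lemma pointwise {R : realType} (z0 z1 z2 z3 z4 a1 a2 a3 bb rr h eta0 Lp Mb Mr e : R) :
  0 <= h -> 0 <= Lp -> 0 <= Mb -> 0 <= Mr -> 0 < e -> 0 < eta0 -> eta0 <= a2 ->
  `|a2 - a1| <= Lp * h -> `|a3 - a2| <= Lp * h -> `|bb| <= Mb -> `|rr| <= Mr ->
  eta0 * (z2 - z1) ^+ 2
  - 5 * e * ((z1 - z0) ^+ 2 + (z2 - z1) ^+ 2 + (z3 - z2) ^+ 2 + (z4 - z3) ^+ 2)
  - (12 * ((2 * Lp + Mb) ^+ 2 / (4 * e)) + Mr) * h ^+ 2 * (z1 ^+ 2 + z2 ^+ 2 + z3 ^+ 2)
  <= Sk z0 z1 z2 z3 z4 a2 bb rr h - (Tf z0 z1 z2 z3 a1 a2 - Tf z1 z2 z3 z4 a2 a3).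
Proof.
move=> hh hL hM hR he heta ha2 ha1 ha3 hb hr.
set K := 2 * Lp + Mb.
set C := K ^+ 2 / (4 * e).
have hK : 0 <= K by rewrite /K; lra.
have hLK : Lp * h <= K * h by apply: ler_wpM2r => //; rewrite /K; lra.
have hMK : Mb * h <= K * h by apply: ler_wpM2r => //; rewrite /K; lra.
have hq1 : `|(a2 - a3) / 12| <= K * h.
  rewrite normrM (ger0_norm (_ : 0 <= 12^-1)) ?invr_ge0 //; rewrite distrC in ha3; have := normr_ge0 (a2 - a3); lra.
have hq2 : `|- ((a2 - a3) / 12)| <= K * h by rewrite normrN.
have hr1 : `|(a2 - a1) / 12| <= K * h.
  rewrite normrM (ger0_norm (_ : 0 <= 12^-1)) ?invr_ge0 //; have := normr_ge0 (a2 - a1); lra.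
have hr2 : `|- ((a2 - a1) / 12)| <= K * h by rewrite normrN.
have hr3 : `|2 * ((a2 - a1) / 12)| <= K * h.
  rewrite !normrM (ger0_norm (_ : 0 <= 2)) // (ger0_norm (_ : 0 <= 12^-1)) ?invr_ge0 //; have := normr_ge0 (a2 - a1); lra.
have ha : `|a2 - a1| <= K * h by lra.
have hb1 : `|h * bb / 12| <= K * h.
  rewrite !normrM (ger0_norm hh) (ger0_norm (_ : 0 <= 12^-1)) ?invr_ge0 //.
  have : h * `|bb| <= h * Mb by apply: ler_wpM2l.
  have : 0 <= h * `|bb| by apply: mulr_ge0.
  lra.
have hb2 : `|- (h * bb / 12)| <= K * h by rewrite normrN.
have hb3 : `|7 * (h * bb / 12)| <= K * h.
  rewrite !normrM (ger0_norm hh) (ger0_norm (_ : 0 <= 12^-1)) ?invr_ge0 // (ger0_norm (_ : 0 <= 7)) //.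
  have : h * `|bb| <= h * Mb by apply: ler_wpM2l.
  have : 0 <= h * `|bb| by apply: mulr_ge0.
  lra.
have c1 := cross _ z1 (z2 - z1) _ _ _ ha hK hh he.
have c2 := cross _ z3 (z2 - z1) _ _ _ hq1 hK hh he.
have c3 := cross _ z2 (z2 - z1) _ _ _ hq2 hK hh he.
have c4 := cross _ z3 (z3 - z2) _ _ _ hq2 hK hh he.
have c5 := cross _ z2 (z3 - z2) _ _ _ hq1 hK hh he.
have c6 := cross _ z1 (z1 - z0) _ _ _ hr2 hK hh he.
have c7 := cross _ z1 (z2 - z1) _ _ _ hr3 hK hh he.
have c8 := cross _ z1 (z3 - z2) _ _ _ hr2 hK hh he.
have c9 := cross _ z2 (z1 - z0) _ _ _ hb2 hK hh he.
have c10 := cross _ z2 (z2 - z1) _ _ _ hb3 hK hh he.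
have c11 := cross _ z2 (z3 - z2) _ _ _ hb3 hK hh he.
have c12 := cross _ z2 (z4 - z3) _ _ _ hb2 hK hh he.
have hA : eta0 * (z2 - z1) ^+ 2 <= a2 * (z2 - z1) ^+ 2 by apply: ler_wpM2r => //; apply: sqr_ge0.
have hY : 0 <= a2 * (2*z2-z1-z3)^+2/12.
  apply: mulr_ge0; last by rewrite invr_ge0.
  apply: mulr_ge0; [lra | apply: sqr_ge0].
have hRr : - (Mr * h ^+ 2 * z2 ^+ 2) <= h ^+ 2 * rr * z2 ^+ 2.
  have : - rr <= Mr by have := ler_norm (- rr); rewrite normrN; lra.
  move=> hr'.
  have hz : 0 <= h ^+ 2 * z2 ^+ 2 by apply: mulr_ge0; apply: sqr_ge0.
  have : - rr * (h ^+ 2 * z2 ^+ 2) <= Mr * (h ^+ 2 * z2 ^+ 2) by apply: ler_wpM2r.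
  lra.
have hid : Sk z0 z1 z2 z3 z4 a2 bb rr h - (Tf z0 z1 z2 z3 a1 a2 - Tf z1 z2 z3 z4 a2 a3)
  = a2 * (z2-z1)^+2 + a2 * (2*z2-z1-z3)^+2/12 + (a2-a1)*z1*(z2-z1)
   + ((a2 - a3) / 12) * z3 * (z2 - z1) + (- ((a2 - a3) / 12)) * z2 * (z2 - z1)
   + (- ((a2 - a3) / 12)) * z3 * (z3 - z2) + ((a2 - a3) / 12) * z2 * (z3 - z2)
   + (- ((a2 - a1) / 12)) * z1 * (z1 - z0) + (2 * ((a2 - a1) / 12)) * z1 * (z2 - z1)
   + (- ((a2 - a1) / 12)) * z1 * (z3 - z2)
   + (- (h * bb / 12)) * z2 * (z1 - z0) + (7 * (h * bb / 12)) * z2 * (z2 - z1)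
   + (7 * (h * bb / 12)) * z2 * (z3 - z2) + (- (h * bb / 12)) * z2 * (z4 - z3)
   + h^+2*rr*z2^+2.
  by rewrite /Sk /Tf; field.
rewrite hid.
have hC : 0 <= C by rewrite /C; apply: divr_ge0; [apply: sqr_ge0 | lra].
have pz : forall z : R, 0 <= C * h ^+ 2 * z ^+ 2.
  by move=> z; apply: mulr_ge0; [apply: mulr_ge0 => //; apply: sqr_ge0 | apply: sqr_ge0].
have pm : forall z : R, 0 <= Mr * h ^+ 2 * z ^+ 2.
  by move=> z; apply: mulr_ge0; [apply: mulr_ge0 => //; apply: sqr_ge0 | apply: sqr_ge0].
have pe : forall z : R, 0 <= e * z ^+ 2.
  by move=> z; apply: mulr_ge0; [lra | apply: sqr_ge0].
have := pz z1; have := pz z2; have := pz z3; have := pm z1; have := pm z3.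
have := pe (z1 - z0); have := pe (z2 - z1); have := pe (z3 - z2); have := pe (z4 - z3).
rewrite /C in c1 c2 c3 c4 c5 c6 c7 c8 c9 c10 c11 c12 *.
lra.
Qed.

Section S.
Variable R : realType.

Lemma shift_eq (F : nat -> R) M : F 0%N = 0 -> F M = 0 ->
  \sum_(0 <= k < M) F k.+1 = \sum_(0 <= k < M) F k.
Proof.
move=> h0 hM.
have := @big_nat_recl R 0 +%R M 0 (fun k => F k) (leq0n M).
rewrite big_nat_recr //= h0 hM add0r addr0 => <- //.
Qed.

Lemma shift_le (F : nat -> R) M : (forall k, 0 <= F k) -> F M = 0 ->
  \sum_(0 <= k < M) F k.+1 <= \sum_(0 <= k < M) F k.
Proof.
move=> h0 hM.
have := @big_nat_recl R 0 +%R M 0 (fun k => F k) (leq0n M).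
rewrite big_nat_recr //= hM addr0 => ->.
by rewrite lerDr.
Qed.

Lemma sum_ge0 (F : nat -> R) M : (forall k, 0 <= F k) -> 0 <= \sum_(0 <= k < M) F k.
Proof. by move=> h; apply: sumr_ge0 => i _. Qed.

Lemma ord_to_nat (G : nat -> R) J M : G 0%N = 0 -> (forall k, (J < k)%N -> G k = 0) ->
  (J < M)%N -> \sum_(i < J) G i.+1 = \sum_(0 <= k < M) G k.
Proof.
move=> h0 hJ hM.
rewrite (big_cat_nat _ (n := J.+1)) //=.
rewrite [X in _ + X]big1_seq ?addr0; last first.
  move=> i /andP [_]; rewrite mem_index_iota => /andP [hi _]; exact: hJ.
by rewrite big_nat_recl // h0 add0r big_mkord.
Qed.


Lemma sum_main (Z A B Rr : nat -> R) (M : nat) (h eta0 Lp Mb Mr e : R) :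
 0 <= h -> 0 <= Lp -> 0 <= Mb -> 0 <= Mr -> 0 < e -> 0 < eta0 ->
 (forall k, eta0 <= A k) -> (forall k, `|A k.+1 - A k| <= Lp * h) ->
 (forall k, `|B k| <= Mb) -> (forall k, `|Rr k| <= Mr) ->
 Z 0%N = 0 -> Z 1%N = 0 -> Z 2%N = 0 -> (forall k, (M <= k)%N -> Z k = 0) ->
 (eta0 - 20 * e) * \sum_(0 <= k < M) (Z k.+1 - Z k) ^+ 2
   - 3 * (12 * ((2 * Lp + Mb) ^+ 2 / (4 * e)) + Mr) * h ^+ 2 * \sum_(0 <= k < M) Z k ^+ 2
 <= \sum_(0 <= k < M) Sk (Z k) (Z k.+1) (Z k.+2) (Z k.+3) (Z k.+4) (A k.+2) (B k.+2) (Rr k.+2) h.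
Proof.
move=> hh hL hM hR he heta hA hAL hB hRr Z0 Z1 Z2 ZM.
have ZMa : Z M = 0 by apply: ZM; lia.
have ZMb : Z M.+1 = 0 by apply: ZM; lia.
have ZMc : Z M.+2 = 0 by apply: ZM; lia.
have ZMd : Z M.+3 = 0 by apply: ZM; lia.
set C1 := 12 * ((2 * Lp + Mb) ^+ 2 / (4 * e)) + Mr.
set T := fun k => Tf (Z k) (Z k.+1) (Z k.+2) (Z k.+3) (A k.+1) (A k.+2).
set F := fun k => (Z k.+1 - Z k) ^+ 2.
set G := fun k => Z k ^+ 2.
set S := fun k => Sk (Z k) (Z k.+1) (Z k.+2) (Z k.+3) (Z k.+4) (A k.+2) (B k.+2) (Rr k.+2) h.
have htel : \sum_(0 <= k < M) (T k.+1 - T k) = 0.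
  rewrite telescope_sumr // /T /Tf (ZM M.+1) ?(ZM M.+2) ?Z1 ?Z2 //= ?leqW //; ring.
have hS : \sum_(0 <= k < M) S k = \sum_(0 <= k < M) (S k + (T k.+1 - T k)).
  by rewrite big_split /= htel addr0.
rewrite -/S hS.
set RHS := fun k => eta0 * F k.+1 - 5 * e * (F k + F k.+1 + F k.+2 + F k.+3)
   - C1 * h ^+ 2 * (G k.+1 + G k.+2 + G k.+3).
have hle : \sum_(0 <= k < M) RHS k <= \sum_(0 <= k < M) (S k + (T k.+1 - T k)).
  apply: ler_sum => k _.
  have := pointwise (Z k) (Z k.+1) (Z k.+2) (Z k.+3) (Z k.+4) (A k.+1) (A k.+2) (A k.+3)
     (B k.+2) (Rr k.+2) h eta0 Lp Mb Mr e hh hL hM hR he heta (hA _) (hAL _) (hAL _) (hB _) (hRr _).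
  rewrite /RHS /S /T /F /G /C1 /=. lra.
apply: le_trans hle.
rewrite /RHS sumrB sumrB -!mulr_sumr !big_split /=.
have F0 : forall k, 0 <= F k by move=> k; apply: sqr_ge0.
have G0 : forall k, 0 <= G k by move=> k; apply: sqr_ge0.
have hF1 : \sum_(0 <= k < M) F k.+1 = \sum_(0 <= k < M) F k.
  by apply: shift_eq; rewrite /F ?Z0 ?Z1 ?ZM // subrr expr0n.
have hF2 : \sum_(0 <= k < M) F k.+2 <= \sum_(0 <= k < M) F k.
  have b : \sum_(0 <= k < M) F k.+1 <= \sum_(0 <= k < M) F k.
    by apply: shift_le => //; rewrite /F ?ZMa ?ZMb ?ZMc ?ZMd // subrr expr0n.
  apply: le_trans b.
  apply: (shift_le (fun k => F k.+1)) => //; by rewrite /F ?ZMa ?ZMb ?ZMc ?ZMd // subrr expr0n.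
have hF3 : \sum_(0 <= k < M) F k.+3 <= \sum_(0 <= k < M) F k.
  apply: le_trans hF2.
  apply: (shift_le (fun k => F k.+2)) => //; by rewrite /F ?ZMa ?ZMb ?ZMc ?ZMd // subrr expr0n.
have hG1 : \sum_(0 <= k < M) G k.+1 <= \sum_(0 <= k < M) G k.
  apply: shift_le => //; by rewrite /G ?ZMa ?ZMb ?ZMc ?ZMd // expr0n.
have hG2 : \sum_(0 <= k < M) G k.+2 <= \sum_(0 <= k < M) G k.
  apply: le_trans hG1.
  apply: (shift_le (fun k => G k.+1)) => //; by rewrite /G ?ZMa ?ZMb ?ZMc ?ZMd // expr0n.
have hG3 : \sum_(0 <= k < M) G k.+3 <= \sum_(0 <= k < M) G k.
  apply: le_trans hG2.
  apply: (shift_le (fun k => G k.+2)) => //; by rewrite /G ?ZMa ?ZMb ?ZMc ?ZMd // expr0n.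
have hC1 : 0 <= C1 * h ^+ 2.
  apply: mulr_ge0; last exact: sqr_ge0.
  rewrite /C1; apply: addr_ge0 => //; apply: mulr_ge0 => //; apply: divr_ge0; [exact: sqr_ge0|lra].
have e1 := ler_wpM2l (ltW he) hF2.
have e2 := ler_wpM2l (ltW he) hF3.
have g1 := ler_wpM2l hC1 hG1.
have g2 := ler_wpM2l hC1 hG2.
have g3 := ler_wpM2l hC1 hG3.
rewrite hF1.
lra.
Qed.

End S.

Unset Implicit Arguments.

Lemma ext_val (R : realType) J (x : 'cV[R]_J) (i : 'I_J) : ext x (Posz i.+1) = x i ord0.
Proof.
rewrite /ext (bigD1 i) //= eqxx big1 ?addr0 // => j hji.
case: eqP => // [[]] hj; exfalso; move/eqP: hji; apply; apply: val_inj => /=; lia.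
Qed.

Lemma ext_out (R : realType) J (x : 'cV[R]_J) (j : int) :
  (forall i : 'I_J, Posz i.+1 != j) -> ext x j = 0.
Proof. by move=> h; rewrite /ext big1 // => i _; rewrite (negbTE (h i)). Qed.

Lemma ext_scale (R : realType) J (x : 'cV[R]_J) (c : R) j : ext (c *: x) j = c * ext x j.
Proof.
rewrite /ext mulr_sumr; apply: eq_bigr => i _; rewrite mxE.
by case: ifP => _; rewrite ?mulr0.
Qed.

Lemma clamp_rng J n : (1 <= J)%N -> (1 <= maxn 1 (minn n J) <= J)%N.
Proof. lia. Qed.
Lemma clamp_step J k : maxn 1 (minn (k.+1 - 2) J) = maxn 1 (minn (k - 2) J) \/
   maxn 1 (minn (k.+1 - 2) J) = (maxn 1 (minn (k - 2) J)).+1.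
Proof. lia. Qed.
Lemma clamp_id J i : (i < J)%N -> maxn 1 (minn (i.+3 - 2) J) = i.+1.
Proof. lia. Qed.
Lemma lt_help m J : (1 <= m <= J)%N -> (m < J.+1)%N /\ (0 < m)%N.
Proof. lia. Qed.
Lemma int_low (k i : nat) : (k <= 2)%N -> Posz i.+1 != (Posz k - 2)%R.
Proof. move=> h; apply/eqP; lia. Qed.
Lemma int_high (k i J : nat) : (i < J)%N -> (J.+3 <= k)%N -> Posz i.+1 != (Posz k - 2)%R.
Proof. move=> h1 h2; apply/eqP; lia. Qed.
Lemma int_m1 (i : nat) : (Posz i.+1 - 1)%R = (Posz i.+2 - 2)%R.
Proof. lia. Qed.
Lemma int_p1 (i : nat) : (Posz i.+1 + 1)%R = (Posz i.+4 - 2)%R.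
Proof. lia. Qed.
Lemma int_p2 (i : nat) : (Posz i.+1 + 2)%R = (Posz i.+4.+1 - 2)%R.
Proof. lia. Qed.
Lemma int_0 (i : nat) : Posz i = (Posz i.+2 - 2)%R.
Proof. lia. Qed.
Lemma nat_h1 (J M k : nat) : M = J.+3 -> (J < k)%N -> (M <= k.+2)%N.
Proof. lia. Qed.
Lemma nat_h2 (J M k : nat) : M = J.+3 -> (J.+1 < k)%N -> (M <= k.+1)%N.
Proof. lia. Qed.
Lemma lt3a J : (J < J.+3)%N. Proof. lia. Qed.
Lemma lt3b J : (J.+1 < J.+3)%N. Proof. lia. Qed.
Lemma int_sh (i : nat) : (Posz i.+3 - 2)%R = Posz i.+1.
Proof. lia. Qed.

Theorem lemma5p3 (R : realType) (Xmin Xmax T : R) (a b r : R -> R -> R)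
  (eta0 L : R) :
  Xmin < Xmax -> 0 < T ->
  (exists M : R, forall t x, 0 < t < T -> Xmin < x < Xmax -> `|a t x| <= M) ->
  (exists M : R, forall t x, 0 < t < T -> Xmin < x < Xmax -> `|b t x| <= M) ->
  (exists M : R, forall t x, 0 < t < T -> Xmin < x < Xmax -> `|r t x| <= M) ->
  0 < eta0 ->
  (forall t x, 0 < t < T -> Xmin < x < Xmax -> eta0 <= a t x) ->
  (forall t x y, 0 < t < T -> Xmin < x < Xmax -> Xmin < y < Xmax ->
     `|a t x - a t y| <= L * `|x - y|) ->
  exists eta2 gamma2 : R, 0 < eta2 /\ 0 <= gamma2 /\
    forall (J : nat) (t : R) (x : 'cV[R]_J), (1 <= J)%N -> 0 < t < T ->
      dotv x (Atilde_app a b r Xmin Xmax t x) >=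
        eta2 * Nnorm ((mesh Xmin Xmax J)^-1 *: x) ^+ 2 - gamma2 * norm2sq x.
Proof.
move=> hX hT [Ma hMa] [Mb0 hMb] [Mr0 hMr] heta ha hLip.
set Lp := `|L|. set Mb := `|Mb0|. set Mr := `|Mr0|. set e := eta0 / 24.
have he : 0 < e by rewrite /e divr_gt0.
have hLp : 0 <= Lp by apply: normr_ge0.
have hMb' : 0 <= Mb by apply: normr_ge0.
have hMr' : 0 <= Mr by apply: normr_ge0.
exists (eta0 - 20 * e), (3 * (12 * ((2 * Lp + Mb) ^+ 2 / (4 * e)) + Mr)).
split; first by rewrite /e; lra.
split.
  apply: mulr_ge0 => //; apply: addr_ge0 => //; apply: mulr_ge0 => //.
  apply: divr_ge0; [exact: sqr_ge0 | lra].
move=> J t x hJ ht.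
set h := mesh Xmin Xmax J.
have hh : 0 < h by rewrite /h /mesh divr_gt0 // ?subr_gt0 // ltr0n.
set clamp := fun n => maxn 1 (minn n J).
have hcl : forall n, (1 <= clamp n <= J)%N by move=> n; rewrite /clamp; apply: clamp_rng.
have hgrid : forall m, (1 <= m <= J)%N -> Xmin < grid Xmin Xmax J m < Xmax.
  move=> m hm.
  have hJ0 : 0 < (J.+1)%:R :> R by rewrite ltr0n.
  have [hm2 hm3] := lt_help _ _ hm.
  have hm1 : m%:R < (J.+1)%:R :> R by rewrite ltr_nat.
  have hm0 : 0 < m%:R :> R by rewrite ltr0n.
  set q := m%:R / (J.+1)%:R : R.
  have hq0 : 0 < q by rewrite /q divr_gt0.
  have hq1 : q < 1 by rewrite /q ltr_pdivrMr // mul1r.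
  have -> : grid Xmin Xmax J m = Xmin + q * (Xmax - Xmin).
    by rewrite /grid /mesh /q; field; rewrite addrC natr1 pnatr_eq0.
  have hd : 0 < Xmax - Xmin by rewrite subr_gt0.
  have h1 : 0 < q * (Xmax - Xmin) by apply: mulr_gt0.
  have h2 : q * (Xmax - Xmin) < 1 * (Xmax - Xmin) by rewrite ltr_pM2r.
  apply/andP; split; lra.
have hgridS : forall m, grid Xmin Xmax J m.+1 - grid Xmin Xmax J m = h.
  by move=> m; rewrite /grid -/h -addn1 natrD; ring.
set A := fun c => a t (grid Xmin Xmax J (clamp (c - 2)%N)).
set B := fun c => b t (grid Xmin Xmax J (clamp (c - 2)%N)).
set Rr := fun c => r t (grid Xmin Xmax J (clamp (c - 2)%N)).
set Z := fun k : nat => ext x (Posz k - 2).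
set M := J.+3.
have hA : forall k, eta0 <= A k by move=> k; apply: ha => //; apply: hgrid.
have hB : forall k, `|B k| <= Mb.
  move=> k; apply: le_trans (hMb _ _ ht (hgrid _ (hcl _))) _; exact: ler_norm.
have hRr : forall k, `|Rr k| <= Mr.
  move=> k; apply: le_trans (hMr _ _ ht (hgrid _ (hcl _))) _; exact: ler_norm.
have hAL : forall k, `|A k.+1 - A k| <= Lp * h.
  move=> k; rewrite /A.
  have [E|E] : clamp (k.+1 - 2)%N = clamp (k - 2)%N \/ clamp (k.+1 - 2)%N = (clamp (k - 2)%N).+1
    by rewrite /clamp; apply: clamp_step.
  - by rewrite E subrr normr0; apply: mulr_ge0 => //; exact: ltW.
  - rewrite E; apply: le_trans (hLip _ _ _ ht (hgrid _ _) (hgrid _ (hcl _))) _.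
      by rewrite -E.
    rewrite hgridS (gtr0_norm hh); apply: ler_wpM2r; [exact: ltW | exact: ler_norm].
have Z0 : Z 0%N = 0 by apply: ext_out => i; apply: int_low.
have Z1 : Z 1%N = 0 by apply: ext_out => i; apply: int_low.
have Z2 : Z 2%N = 0 by apply: ext_out => i; apply: int_low.
have ZM : forall k, (M <= k)%N -> Z k = 0.
  move=> k hk; apply: ext_out => i; exact: int_high (ltn_ord i) hk.
have Zi : forall i : 'I_J, Z i.+3 = x i ord0.
  move=> i; rewrite /Z int_sh; exact: ext_val.
have key := sum_main R Z A B Rr M h eta0 Lp Mb Mr e (ltW hh) hLp hMb' hMr' he heta hA hAL hB hRr Z0 Z1 Z2 ZM.
have hM : M = J.+3 by rewrite /M.
have ZMa : Z M = 0 by apply: ZM.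
have ZMb : Z M.+1 = 0 by apply: ZM; apply: leqnSn.

have hM1 : (J < M)%N by rewrite hM; apply: lt3a.
have hM2 : (J.+1 < M)%N by rewrite hM; apply: lt3b.
have E1 : h ^+ 2 * dotv x (Atilde_app a b r Xmin Xmax t x) =
   \sum_(0 <= k < M) Sk (Z k) (Z k.+1) (Z k.+2) (Z k.+3) (Z k.+4) (A k.+2) (B k.+2) (Rr k.+2) h.
  rewrite /dotv mulr_sumr.
  have Gz : Sk (Z 0%N) (Z 1%N) (Z 2%N) (Z 3%N) (Z 4%N) (A 2%N) (B 2%N) (Rr 2%N) h = 0.
    by rewrite /Sk Z2 mul0r.
  have Gj : forall k, (J < k)%N -> Sk (Z k) (Z k.+1) (Z k.+2) (Z k.+3) (Z k.+4) (A k.+2) (B k.+2) (Rr k.+2) h = 0.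
    by move=> k hk; rewrite /Sk (ZM _ (nat_h1 _ _ _ hM hk)) mul0r.
  rewrite -(ord_to_nat R (fun k => Sk (Z k) (Z k.+1) (Z k.+2) (Z k.+3) (Z k.+4) (A k.+2) (B k.+2) (Rr k.+2) h) J M Gz Gj hM1).
  apply: eq_bigr => i _.
  rewrite /Atilde_app mxE; cbv zeta.
  rewrite -Zi int_m1 int_p1 int_p2 -/(Z _) -/(Z _) -/(Z _) -/(Z _).
  have e0 : ext x (Posz i.+1) = Z i.+3 by rewrite Zi ext_val.
  rewrite e0 /A /B /Rr /clamp clamp_id //= /Sk -/h.
  field; rewrite gt_eqF //.
have E3 : norm2sq x = \sum_(0 <= k < M) Z k ^+ 2.
  have Gz : Z 2%N ^+ 2 = 0 by rewrite Z2 expr0n.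
  have Gj : forall k, (J < k)%N -> Z k.+2 ^+ 2 = 0.
    by move=> k hk; rewrite (ZM _ (nat_h1 _ _ _ hM hk)) expr0n.
  rewrite /norm2sq.
  under eq_bigr => i _ do rewrite -Zi.
  rewrite (ord_to_nat R (fun k => Z k.+2 ^+ 2) J M Gz Gj hM1).
  rewrite (shift_eq R (fun k => Z k.+1 ^+ 2)) ?Z1 ?ZMb ?expr0n //.
  by rewrite (shift_eq R (fun k => Z k ^+ 2)) ?Z0 ?ZMa ?expr0n.
have E2 : Nnorm (h^-1 *: x) ^+ 2 = h^-1 ^+ 2 * \sum_(0 <= k < M) (Z k.+1 - Z k) ^+ 2.
  rewrite /Nnorm sqr_sqrtr; last by apply: sumr_ge0 => i _; apply: sqr_ge0.
  under eq_bigr => i _ do rewrite real_normK ?num_real // !ext_scale -mulrBr exprMn (int_0 i.+1) (int_0 i) -/(Z _) -/(Z _).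
  rewrite -mulr_sumr; congr (_ * _).
  have Gz : (Z 2%N - Z 1%N) ^+ 2 = 0 by rewrite Z2 Z1 subrr expr0n.
  have Gj : forall k, (J.+1 < k)%N -> (Z k.+2 - Z k.+1) ^+ 2 = 0.
    move=> k hk; have hk' := nat_h2 _ _ _ hM hk.
    by rewrite (ZM _ hk') (ZM _ (leq_trans hk' (leqnSn _))) subrr expr0n.
  rewrite (ord_to_nat R (fun k => (Z k.+2 - Z k.+1) ^+ 2) J.+1 M Gz Gj hM2).
  by rewrite (shift_eq R (fun k => (Z k.+1 - Z k) ^+ 2)) ?Z0 ?Z1 ?ZMa ?ZMb ?subrr ?expr0n.
rewrite E2 E3.
have hh2 : 0 < h ^+ 2 by apply: exprn_gt0.
rewrite -(ler_pM2l hh2) E1.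
apply: le_trans key.
rewrite le_eqVlt; apply/orP; left; apply/eqP.
field; by rewrite !gt_eqF.
Qed.
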